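(* Let $R$ be a partially colored tree (a trunk) in which every colored vertex is a leaf, with at most one colored vertex and with $|V(R)|\le 7$. Then Alice can win the $3$-Modified Coloring Game on $R$.
   Context: A partial coloring assigns to some vertices colors from a set of $3$ colors so that adjacent colored vertices get different colors; a color is legal for an uncolored vertex $v$ if no neighbor of $v$ has that color. The $k$-Modified Coloring Game ($k$-MCG) on a partially colored graph: Bob and Alice alternate turns, Bob first, each turn coloring an uncolored vertex with a legal color from a set of $k$ colors, except that Bob may choose to pass on any of his turns. Bob wins if at some point an uncolored vertex has no legal color; Alice wins if every vertex becomes colored. A trunk of a partially colored forest $F$ is a maximal connected subgraph of $F$ in which every colored vertex is a leaf. *)

(* Defs.v *)
From mathcomp Require Import all_boot.
Set Implicit Arguments. Unset Strict Implicit. Unset Printing Implicit Defensive.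

Definition simple_graph (T : finType) (e : rel T) : Prop :=
  symmetric e /\ irreflexive e.

Definition acyclic (T : finType) (e : rel T) : Prop :=
  forall p : seq T, uniq p -> 3 <= size p -> ~~ cycle e p.

Definition connected_graph (T : finType) (e : rel T) : Prop :=
  forall x y : T, connect e x y.

Definition is_tree (T : finType) (e : rel T) : Prop :=
  [/\ simple_graph e, connected_graph e & acyclic e].

Definition leaf (T : finType) (e : rel T) (v : T) : Prop :=
  #|[set y | e v y]| = 1.

(* Partial colorings with colors from 'I_k; None = uncolored. *)
Definition pcoloring (T : finType) (k : nat) := T -> option 'I_k.

Definition proper_pcoloring (T : finType) (e : rel T) k (c : pcoloring T k) : Prop :=
  forall x y a, e x y -> c x = Some a -> c y <> Some a.

Definition legal (T : finType) (e : rel T) k (c : pcoloring T k) (v : T) (a : 'I_k) : Prop :=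
  c v = None /\ forall u, e v u -> c u <> Some a.

Definition all_colored (T : finType) k (c : pcoloring T k) : Prop :=
  forall v, c v <> None.

Definition stuck (T : finType) (e : rel T) k (c : pcoloring T k) : Prop :=
  exists v, c v = None /\ forall a, ~ legal e c v a.

Definition recolor (T : finType) k (c : pcoloring T k) (v : T) (a : 'I_k) : pcoloring T k :=
  fun x => if x == v then Some a else c x.

(* AliceWinsBob c : Alice has a winning strategy
   from position c with Bob to move; AliceWinsAlice c : same with Alice to
   move.  Bob may pass; Alice may not.  Bob wins as soon as a position is
   stuck; Alice wins when every vertex is colored. *)
Inductive AliceWinsBob (T : finType) (e : rel T) (k : nat) : pcoloring T k -> Prop :=
| awb_done c : ~ stuck e c -> all_colored c -> AliceWinsBob e c
| awb_step c : ~ stuck e c -> ~ all_colored c ->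
    AliceWinsAlice e c ->
    (forall v a, legal e c v a -> AliceWinsAlice e (recolor c v a)) ->
    AliceWinsBob e c
with AliceWinsAlice (T : finType) (e : rel T) (k : nat) : pcoloring T k -> Prop :=
| awa_done c : ~ stuck e c -> all_colored c -> AliceWinsAlice e c
| awa_step c v a : ~ stuck e c -> legal e c v a ->
    AliceWinsBob e (recolor c v a) -> AliceWinsAlice e c.

Definition alice_wins_MCG (T : finType) (e : rel T) (k : nat) (c : pcoloring T k) : Prop :=
  AliceWinsBob e c.

(* Main.v *)
Require Import Defs.
From mathcomp Require Import all_boot.
From mathcomp Require Import zify.
Set Implicit Arguments. Unset Strict Implicit. Unset Printing Implicit Defensive.

Definition nbr (T : finType) (e : rel T) (v : T) : {set T} := [set y | e v y].
Definition Kc (T : finType) (e : rel T) (c : pcoloring T 3) (v : T) : {set 'I_3} :=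
  [set a | [exists x, e v x && (c x == Some a)]].
Definition Cn (T : finType) (e : rel T) (c : pcoloring T 3) (v : T) : {set T} :=
  [set x | e v x && (c x != None)].
Definition Un (T : finType) (e : rel T) (c : pcoloring T 3) (v : T) : {set T} :=
  [set x | e v x && (c x == None)].
Definition safe (T : finType) (e : rel T) (c : pcoloring T 3) (v : T) : bool :=
  (c v != None) || (#|Kc e c v| + #|Un e c v| <= 2).
Definition ucnt (T : finType) (c : pcoloring T 3) := #|[set v | c v == None]|.

Lemma Kc_Cn (T : finType) (e : rel T) (c : pcoloring T 3) v :
  #|Kc e c v| <= #|Cn e c v|.
Proof.
apply: leq_trans (leq_imset_card (fun x => odflt ord0 (c x)) (Cn e c v)).
apply: subset_leq_card; apply/subsetP => a; rewrite inE => /existsP [x /andP [Hx /eqP Hc]].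
apply/imsetP; exists x; first by rewrite inE Hx Hc.
by rewrite Hc.
Qed.

Lemma Cn_Un (T : finType) (e : rel T) (c : pcoloring T 3) v :
  #|Cn e c v| + #|Un e c v| = #|nbr e v|.
Proof.
rewrite -(cardsID [set x | c x != None] (nbr e v)).
congr (_ + _); apply: eq_card => x; rewrite !inE //.
by rewrite negbK andbC.
Qed.

Lemma unsafe_deg (T : finType) (e : rel T) (c : pcoloring T 3) v :
  ~~ safe e c v -> 3 <= #|nbr e v|.
Proof.
rewrite /safe negb_or => /andP [_ H]; rewrite -ltnNge in H.
rewrite -(Cn_Un e c v); have := Kc_Cn e c v; lia.
Qed.

Lemma unsafe_none (T : finType) (e : rel T) (c : pcoloring T 3) v :
  ~~ safe e c v -> c v = None.
Proof. by rewrite /safe negb_or => /andP [/negPn /eqP]. Qed.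

Lemma legalP (T : finType) (e : rel T) (c : pcoloring T 3) v a :
  legal e c v a <-> c v = None /\ a \notin Kc e c v.
Proof.
split.
- move=> [Hv Hu]; split=> //; apply/negP; rewrite inE => /existsP [x /andP [Hx /eqP Hcx]].
  exact: Hu x Hx Hcx.
- move=> [Hv Ha]; split=> // u Hu Hcu; move/negP: Ha; apply; rewrite inE.
  by apply/existsP; exists u; rewrite Hu Hcu eqxx.
Qed.

Lemma ex_free (K : {set 'I_3}) : #|K| <= 2 -> exists a, a \notin K.
Proof.
move=> HK; case: (pickP (fun a => a \notin K)) => [a Ha|H]; first by exists a.
have : [set: 'I_3] \subset K by apply/subsetP => a _; move: (H a) => /negbFE.
move/subset_leq_card; rewrite cardsT card_ord => H3.
by have := leq_trans H3 HK.
Qed.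

Lemma notstuck (T : finType) (e : rel T) (c : pcoloring T 3) :
  (forall v, c v = None -> #|Kc e c v| <= 2) -> ~ stuck e c.
Proof.
move=> H [v [Hv Hn]]; have [a Ha] := ex_free (H v Hv).
by apply: (Hn a); apply/legalP.
Qed.

Lemma safe_K (T : finType) (e : rel T) (c : pcoloring T 3) v :
  safe e c v -> c v = None -> #|Kc e c v| <= 2.
Proof. rewrite /safe => /orP [H|H] Hv; first by rewrite Hv in H. lia. Qed.

Lemma Kc_recolor (T : finType) (e : rel T) (c : pcoloring T 3) x d v :
  Kc e (recolor c x d) v \subset d |: Kc e c v.
Proof.
apply/subsetP => a; rewrite !inE => /existsP [y /andP [Hy]]; rewrite /recolor.
case: (eqVneq y x) => [_ /= /eqP Hda|_ Hcy]; first by case: Hda => ->; rewrite eqxx.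
by apply/orP; right; apply/existsP; exists y; rewrite Hy.
Qed.

Lemma Kc_recolor_nadj (T : finType) (e : rel T) (c : pcoloring T 3) x d v :
  ~~ e v x -> Kc e (recolor c x d) v \subset Kc e c v.
Proof.
move=> Hn; apply/subsetP => a; rewrite !inE => /existsP [y /andP [Hy]]; rewrite /recolor.
case: (eqVneq y x) => [Eyx|_ Hcy]; first by rewrite -Eyx Hy in Hn.
by apply/existsP; exists y; rewrite Hy.
Qed.

Lemma Un_recolor (T : finType) (e : rel T) (c : pcoloring T 3) x d v :
  Un e (recolor c x d) v \subset Un e c v :\ x.
Proof.
apply/subsetP => y; rewrite !inE /recolor.
case: (eqVneq y x) => [->|Hyx] /=; first by rewrite andbF.
by [].
Qed.

Lemma safe_recolor (T : finType) (e : rel T) (c : pcoloring T 3) x d v :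
  safe e c v -> c x = None -> safe e (recolor c x d) v.
Proof.
move=> Hs Hx; rewrite /safe.
case: (eqVneq v x) => [->|Hvx]; first by rewrite /recolor eqxx.
have -> : recolor c x d v = c v by rewrite /recolor (negbTE Hvx).
case/orP: Hs => [-> //| H]; apply/orP; right.
have HU := subset_leq_card (Un_recolor e c x d v).
have HD := cardsD1 x (Un e c v).
case Hvxe: (e v x).
- have Hin : x \in Un e c v by rewrite inE Hvxe Hx eqxx.
  rewrite Hin in HD.
  have HK := subset_leq_card (Kc_recolor e c x d v).
  have := cardsU1 d (Kc e c v). have := leq_b1 (d \notin Kc e c v).
  rewrite HD in H => _ Hc; rewrite Hc in HK. case: (d \notin Kc e c v) HK => /= HK; move: HU H HK; move: #|Un e c v :\ x| #|Kc e (recolor c x d) v| #|Un e (recolor c x d) v| #|Kc e c v| => n1 n2 n3 n4; lia.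
- have HK := subset_leq_card (@Kc_recolor_nadj _ e c x d v (negbT Hvxe)).
  case: (x \in Un e c v) HD => /= HD; move: HU H HK HD; move: #|Un e c v :\ x| #|Kc e (recolor c x d) v| #|Un e (recolor c x d) v| #|Kc e c v| #|Un e c v| => n1 n2 n3 n4 n5; lia.
Qed.

Lemma ucnt_recolor (T : finType) (c : pcoloring T 3) x d :
  c x = None -> ucnt (recolor c x d) < ucnt c.
Proof.
move=> Hx; rewrite /ucnt (cardsD1 x [set v | c v == None]) inE Hx eqxx /= add1n ltnS.
apply: subset_leq_card; apply/subsetP => y; rewrite !inE /recolor.
by case: (eqVneq y x) => [->|Hyx].
Qed.

Lemma colP (T : finType) (c : pcoloring T 3) : all_colored c \/ exists v, c v = None.
Proof.
case: (pickP (fun v => c v == None)) => [v /eqP Hv|H]; first by right; exists v.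
by left => v Hv; move: (H v); rewrite Hv eqxx.
Qed.

Lemma allsafe (T : finType) (e : rel T) n (c : pcoloring T 3) :
  ucnt c <= n -> (forall v, safe e c v) -> AliceWinsBob e c /\ AliceWinsAlice e c.
Proof.
elim: n c => [|n IH] c Hn Hs.
  have Hns : ~ stuck e c by apply: notstuck => v Hv; apply: safe_K.
  have Hall : all_colored c.
    move=> v Hv; have : 0 < ucnt c by apply/card_gt0P; exists v; rewrite inE Hv.
    move: Hn; rewrite /ucnt; move: #|_| => m; lia.
  by split; constructor.
have Hns : ~ stuck e c by apply: notstuck => v Hv; apply: safe_K.
have HA : AliceWinsAlice e c.
  case: (colP c) => [Hall|[v Hv]]; first by apply: awa_done.
  have [a Ha] := ex_free (safe_K (Hs v) Hv).
  apply: (@awa_step _ _ _ _ v a) => //; first by apply/legalP.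
  apply: (IH _ _ _).1; last by move=> v'; apply: safe_recolor.
  have := ucnt_recolor a Hv; move: Hn; move: (ucnt c) (ucnt (recolor c v a)) => m1 m2; lia.
split=> //.
case: (colP c) => [Hall|[v0 Hv0]]; first by apply: awb_done.
apply: awb_step => //; first by move=> Hall; apply: (Hall v0).
move=> v a /legalP [Hv _].
apply: (IH _ _ _).2; last by move=> v'; apply: safe_recolor.
have := ucnt_recolor a Hv; move: Hn; move: (ucnt c) (ucnt (recolor c v a)) => m1 m2; lia.
Qed.

Lemma H_alice (T : finType) (e : rel T) (c : pcoloring T 3) w :
  (forall v, v != w -> safe e c v) -> (c w = None -> #|Kc e c w| <= 2) ->
  AliceWinsAlice e c.
Proof.
move=> Hs Hw.
have Hns : ~ stuck e c.
  apply: notstuck => v Hv; case: (eqVneq v w) => [Evw|Hvw]; first by rewrite Evw; apply: Hw; rewrite -Evw.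
  exact: safe_K (Hs v Hvw) Hv.
case Hcw: (c w) => [b|].
  apply: (@allsafe _ e _ c (leqnn _) _).2 => v.
  case: (eqVneq v w) => [->|Hvw]; [by rewrite /safe Hcw | exact: Hs].
have [a Ha] := ex_free (Hw Hcw).
apply: (@awa_step _ _ _ _ w a) => //; first by apply/legalP.
apply: (@allsafe _ e _ _ (leqnn _) _).1 => v.
case: (eqVneq v w) => [->|Hvw]; first by rewrite /safe /recolor eqxx.
by apply: safe_recolor => //; exact: Hs.
Qed.

Lemma G_bob (T : finType) (e : rel T) (c : pcoloring T 3) w :
  (forall v, v != w -> safe e c v) -> (c w = None -> #|Kc e c w| <= 1) ->
  AliceWinsBob e c.
Proof.
move=> Hs Hw.
have Hns : ~ stuck e c.
  apply: notstuck => v Hv; case: (eqVneq v w) => [Evw|Hvw].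
    by rewrite Evw; apply: leq_trans (Hw _) _; rewrite // -Evw.
  exact: safe_K (Hs v Hvw) Hv.
case: (colP c) => [Hall|[v0 Hv0]]; first by apply: awb_done.
apply: awb_step => //; first by move=> Hall; apply: (Hall v0).
  by apply: (H_alice Hs) => /Hw H; apply: leq_trans H _.
move=> v a /legalP [Hv Ha].
apply: (@H_alice _ _ _ w).
  by move=> u Huw; apply: safe_recolor => //; exact: Hs.
move=> Hw'.
have Hwv : w != v by apply/eqP => Ewv; rewrite Ewv /recolor eqxx in Hw'.
have Hcw : c w = None by rewrite /recolor (negbTE Hwv) in Hw'.
have HK := subset_leq_card (Kc_recolor e c v a w).
have := cardsU1 a (Kc e c w). have := Hw Hcw.
case: (a \notin Kc e c w) => /=; move: HK; move: #|Kc e (recolor c v a) w| #|a |: Kc e c w| #|Kc e c w| => n1 n2 n3; lia.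
Qed.

Lemma mtg (T : finType) (e : rel T) (c : pcoloring T 3) x d w :
  ~ stuck e c -> legal e c x d ->
  (forall v, v != w -> safe e (recolor c x d) v) ->
  #|Kc e (recolor c x d) w| <= 1 -> AliceWinsAlice e c.
Proof.
move=> Hns Hl Hs Hk; apply: (@awa_step _ _ _ _ x d) => //.
by apply: (G_bob Hs) => _.
Qed.

Definition trifree (T : finType) (e : rel T) :=
  forall x y z, e x y -> e y z -> e z x -> False.
Definition c4free (T : finType) (e : rel T) :=
  forall x y z w, e x y -> e y z -> e z w -> e w x -> x != z -> y != w -> False.

Lemma adj_neq (T : finType) (e : rel T) x y : irreflexive e -> e x y -> x != y.
Proof. by move=> Hirr H; apply/eqP => E; rewrite E Hirr in H. Qed.

Lemma acyc_tri (T : finType) (e : rel T) : irreflexive e -> acyclic e -> trifree e.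
Proof.
move=> Hirr Hac x y z Hxy Hyz Hzx.
have n1 := adj_neq Hirr Hxy; have n2 := adj_neq Hirr Hyz; have n3 := adj_neq Hirr Hzx.
apply: (negP (Hac [:: x; y; z] _ _)) => //.
  by rewrite /= !inE negb_or n1 eq_sym n3 n2.
by rewrite /= Hxy Hyz Hzx.
Qed.

Lemma acyc_4 (T : finType) (e : rel T) : irreflexive e -> acyclic e -> c4free e.
Proof.
move=> Hirr Hac x y z w Hxy Hyz Hzw Hwx nxz nyw.
have n1 := adj_neq Hirr Hxy; have n2 := adj_neq Hirr Hyz; have n3 := adj_neq Hirr Hzw.
have n4 := adj_neq Hirr Hwx.
apply: (negP (Hac [:: x; y; z; w] _ _)) => //.
  by rewrite /= !inE !negb_or n1 nxz eq_sym n4 n2 nyw n3.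
by rewrite /= Hxy Hyz Hzw Hwx.
Qed.

Definition Mc (T : finType) (e : rel T) v : {set T} := v |: nbr e v.

Lemma card_M (T : finType) (e : rel T) v : irreflexive e -> #|Mc e v| = #|nbr e v|.+1.
Proof. by move=> Hirr; rewrite /Mc cardsU1 inE Hirr. Qed.

Lemma card_le1 (T : finType) (A : {set T}) :
  (forall z z', z \in A -> z' \in A -> z = z') -> #|A| <= 1.
Proof.
move=> H; case: (set_0Vmem A) => [->|[z Hz]]; first by rewrite cards0.
apply: leq_trans (subset_leq_card (_ : A \subset [set z])) _; last by rewrite cards1.
by apply/subsetP => y Hy; rewrite inE; apply/eqP; exact: H.
Qed.

Lemma Mint_bound (T : finType) (e : rel T) a b :
  symmetric e -> irreflexive e -> trifree e -> c4free e ->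
  a != b -> #|Mc e a :&: Mc e b| <= 1 + e a b.
Proof.
move=> Hsym Hirr Htri H4 nab.
case Eab: (e a b).
  have HS : Mc e a :&: Mc e b \subset [set a; b].
  apply/subsetP => z; rewrite /Mc /nbr !inE => /andP [/orP [->//|Haz] /orP [->|Hbz]]; first by rewrite orbT.
  by case: (Htri a z b) => //; rewrite Hsym.
  by apply: leq_trans (subset_leq_card HS) _; rewrite cards2 nab.
apply: card_le1 => z z'; rewrite /Mc /nbr !inE => /andP [/orP [/eqP Eza|Haz] /orP [/eqP Ezb|Hbz]]
   /andP [/orP [/eqP Eza'|Haz'] /orP [/eqP Ezb'|Hbz']];
  try (by subst; rewrite ?eqxx in nab); try (by subst; rewrite ?Hirr ?Eab // Hsym Eab in Hbz);
  try (by subst; rewrite ?Hirr ?Eab // Hsym Eab in Hbz'); try (by subst; rewrite Eab in Haz);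
  try (by subst; rewrite Eab in Haz').
apply/eqP; apply/negPn/negP => nzz.
by apply: (H4 a z b z') => //; rewrite Hsym.
Qed.

Lemma card3 (T : finType) (A B C : {set T}) :
  #|A| + #|B| + #|C| = #|A :|: B :|: C| + #|A :&: B| + #|(A :|: B) :&: C|.
Proof.
have := cardsUI A B; have := cardsUI (A :|: B) C.
move: #|A| #|B| #|C| #|A :|: B| #|A :&: B| #|A :|: B :|: C| #|(A :|: B) :&: C| => *; lia.
Qed.

Lemma capU_le (T : finType) (A B C : {set T}) :
  #|(A :|: B) :&: C| <= #|A :&: C| + #|B :&: C|.
Proof.
rewrite setIUl; have := cardsUI (A :&: C) (B :&: C).
move: #|A :&: C :|: B :&: C| #|A :&: C| #|B :&: C| #|A :&: C :&: (B :&: C)| => *; lia.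
Qed.

Lemma big3_sparse (T : finType) (e : rel T) a b c :
  symmetric e -> irreflexive e -> trifree e -> c4free e -> #|T| <= 7 ->
  a != b -> b != c -> a != c ->
  3 <= #|nbr e a| -> 3 <= #|nbr e b| -> 3 <= #|nbr e c| ->
  e a b + e b c + e a c <= 1 -> False.
Proof.
move=> Hsym Hirr Htri H4 HT nab nbc nac Ha Hb Hc Hsp.
have := card3 (Mc e a) (Mc e b) (Mc e c).
have := subset_leq_card (subsetT (Mc e a :|: Mc e b :|: Mc e c)); rewrite cardsT.
have := capU_le (Mc e a) (Mc e b) (Mc e c).
have := Mint_bound Hsym Hirr Htri H4 nab.
have := Mint_bound Hsym Hirr Htri H4 nbc.
have := Mint_bound Hsym Hirr Htri H4 nac.
rewrite (card_M a Hirr) (card_M b Hirr) (card_M c Hirr).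
rewrite setIC [Mc e b :&: Mc e c]setIC.
move: Hsp; case: (e a b); case: (e b c); case: (e a c) => //= Hsp.
all: move: Ha Hb Hc HT; move: #|nbr e a| #|nbr e b| #|nbr e c| #|T| #|Mc e a :|: Mc e b :|: Mc e c| #|Mc e a :&: Mc e b| #|Mc e c :&: Mc e a| #|Mc e c :&: Mc e b| #|(Mc e a :|: Mc e b) :&: Mc e c| => *; lia.
Qed.

Lemma big3_path (T : finType) (e : rel T) a b c :
  symmetric e -> irreflexive e -> trifree e -> c4free e -> #|T| <= 7 ->
  a != b -> b != c -> a != c ->
  3 <= #|nbr e a| -> 3 <= #|nbr e b| -> 3 <= #|nbr e c| ->
  e a b -> e b c -> False.
Proof.
move=> Hsym Hirr Htri H4 HT nab nbc nac Ha Hb Hc Hab Hbc.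
have HS : (Mc e a :|: Mc e b) :&: Mc e c \subset Mc e b :&: Mc e c.
  apply/subsetP => z; rewrite /Mc /nbr !inE.
  case/andP => /orP [/orP [/eqP Eza|Haz]|Hzb] Hzc; rewrite ?Hzb ?Hzc ?andbT //.
    subst z; case/orP: Hzc => [/eqP Eac|Hca]; first by rewrite Eac eqxx in nac.
    by case: (Htri a b c).
  case: (eqVneq z b) => [//|nzb] /=.
  case/orP: Hzc => [/eqP Ezc|Hcz].
    by subst z; case: (Htri a c b) => //; rewrite Hsym.
  by case: (H4 a z c b) => //; rewrite Hsym.
have := card3 (Mc e a) (Mc e b) (Mc e c).
have := subset_leq_card (subsetT (Mc e a :|: Mc e b :|: Mc e c)); rewrite cardsT.
have := subset_leq_card HS.
have := Mint_bound Hsym Hirr Htri H4 nab.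
have := Mint_bound Hsym Hirr Htri H4 nbc.
rewrite (card_M a Hirr) (card_M b Hirr) (card_M c Hirr) Hab Hbc /=.
move: Ha Hb Hc HT; move: #|nbr e a| #|nbr e b| #|nbr e c| #|T| #|Mc e a :|: Mc e b :|: Mc e c| #|Mc e a :&: Mc e b| #|Mc e b :&: Mc e c| #|(Mc e a :|: Mc e b) :&: Mc e c| => *; lia.
Qed.

Lemma big3 (T : finType) (e : rel T) a b c :
  symmetric e -> irreflexive e -> trifree e -> c4free e -> #|T| <= 7 ->
  a != b -> b != c -> a != c ->
  3 <= #|nbr e a| -> 3 <= #|nbr e b| -> 3 <= #|nbr e c| -> False.
Proof.
move=> Hsym Hirr Htri H4 HT nab nbc nac Ha Hb Hc.
case Eab: (e a b); case Ebc: (e b c); case Eac: (e a c).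
- by apply: (Htri a b c) => //; rewrite Hsym.
- exact: (big3_path Hsym Hirr Htri H4 HT nab nbc nac Ha Hb Hc Eab Ebc).
- apply: (big3_path Hsym Hirr Htri H4 HT (b:=a) (a:=b) (c:=c)) => //; by rewrite 1?eq_sym // Hsym.
- by apply: (big3_sparse Hsym Hirr Htri H4 HT nab nbc nac Ha Hb Hc); rewrite Eab Ebc Eac.
- apply: (big3_path Hsym Hirr Htri H4 HT (a:=a) (b:=c) (c:=b)) => //; by rewrite 1?eq_sym // Hsym.
- by apply: (big3_sparse Hsym Hirr Htri H4 HT nab nbc nac Ha Hb Hc); rewrite Eab Ebc Eac.
- by apply: (big3_sparse Hsym Hirr Htri H4 HT nab nbc nac Ha Hb Hc); rewrite Eab Ebc Eac.
- by apply: (big3_sparse Hsym Hirr Htri H4 HT nab nbc nac Ha Hb Hc); rewrite Eab Ebc Eac.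
Qed.

Lemma adj_deg3 (T : finType) (e : rel T) a b :
  symmetric e -> trifree e -> #|T| <= 7 -> e a b ->
  3 <= #|nbr e a| -> 3 <= #|nbr e b| -> #|nbr e a| = 3 \/ #|nbr e b| = 3.
Proof.
move=> Hsym Htri HT Hab Ha Hb.
have H0 : #|nbr e a :&: nbr e b| = 0.
  apply/eqP; rewrite cards_eq0; apply/eqP/setP => z; rewrite /nbr !inE.
  apply/negP => /andP [Haz Hbz]; by apply: (Htri a z b) => //; rewrite Hsym.
have := cardsUI (nbr e a) (nbr e b).
have := subset_leq_card (subsetT (nbr e a :|: nbr e b)); rewrite cardsT.
move: H0 Ha Hb HT; move: #|nbr e a| #|nbr e b| #|T| #|nbr e a :|: nbr e b| #|nbr e a :&: nbr e b| => *; lia.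
Qed.

Lemma case_eq (T : finType) (e : rel T) (c : pcoloring T 3) w1 w2 x y col :
  symmetric e -> irreflexive e -> trifree e -> c4free e ->
  e w1 w2 -> e w1 x -> e w2 y -> c x = Some col -> c y = Some col ->
  c w1 = None -> c w2 = None ->
  (forall z, c z != None -> (z == x) || (z == y)) ->
  #|nbr e w2| = 3 ->
  Kc e c w1 \subset [set col] -> Kc e c w2 \subset [set col] ->
  (forall v, v != w1 -> v != w2 -> safe e c v) -> ~ stuck e c ->
  AliceWinsAlice e c.
Proof.
move=> Hsym Hirr Htri H4 H12 H1x H2y Hcx Hcy Hc1 Hc2 HXY Hd2 HK1 HK2 Hoth Hns.
have [z /andP [Hz Hz']] : exists z, (z \in nbr e w2) && (z \notin [set w1; y]).
  case: (pickP (fun z => (z \in nbr e w2) && (z \notin [set w1; y]))) => [z Hz|H]; first by exists z.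
  have : nbr e w2 \subset [set w1; y].
    by apply/subsetP => z Hz; move: (H z); rewrite Hz /= => /negbFE.
  by move/subset_leq_card; rewrite Hd2 cards2; case: (w1 != y).
move: Hz Hz'; rewrite /nbr !inE negb_or => H2z /andP [nz1 nzy].
have nxw2 : x != w2 by apply/eqP => E; rewrite E Hc2 in Hcx.
have ny1 : y != w1 by apply/eqP => E; rewrite E Hc1 in Hcy.
have Hcz : c z = None.
  apply/eqP; apply/negPn/negP => /HXY /orP [/eqP Ezx|/eqP Ezy]; last by rewrite Ezy eqxx in nzy.
  by subst z; apply: (Htri x w1 w2) => //; rewrite Hsym.
have Hn1z : ~~ e w1 z by apply/negP => H1z; apply: (Htri w1 z w2) => //; rewrite Hsym.
have Hl : legal e c z col.
  split=> // u Hu Hcu.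
  have /HXY : c u != None by rewrite Hcu.
  case/orP => /eqP Eu; subst u.
    by apply: (H4 z x w1 w2) => //; rewrite Hsym.
  by apply: (Htri z y w2) => //; rewrite Hsym.
apply: (mtg (x:=z) (d:=col) (w:=w1)) => //.
  move=> v nv1.
  case: (eqVneq v z) => [->|nvz]; first by rewrite /safe /recolor eqxx.
  case: (eqVneq v w2) => [Ev2|nv2]; last by apply: safe_recolor => //; apply: Hoth.
  subst v; apply/orP; right.
  have HK : #|Kc e (recolor c z col) w2| <= 1.
    apply: leq_trans (subset_leq_card (_ : _ \subset [set col])) _; last by rewrite cards1.
    apply: subset_trans (Kc_recolor e c z col w2) _.
    by apply/subsetP => a; rewrite in_setU1 => /orP [/eqP->|/(subsetP HK2)]; rewrite ?inE.
  have HN : nbr e w2 = [set w1; y; z].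
    apply/eqP; rewrite eq_sym eqEcard; apply/andP; split.
      by apply/subsetP => u; rewrite /nbr !inE => /orP [/orP [/eqP->|/eqP->]|/eqP->]; rewrite ?H2y ?H2z // Hsym.
    have -> : [set w1; y; z] = w1 |: [set y; z] by apply/setP => u; rewrite !inE orbA.
    rewrite Hd2 cardsU1 cards2 !inE negb_or.
    by rewrite eq_sym ny1 eq_sym nz1 eq_sym nzy.
  have HU : #|Un e (recolor c z col) w2| <= 1.
    apply: leq_trans (subset_leq_card (_ : _ \subset [set w1])) _; last by rewrite cards1.
    apply/subsetP => u; rewrite /Un !inE /recolor.
    case: (eqVneq u z) => [->|nuz]; first by rewrite andbF.
    move=> /andP [H2u Hcu].
    have : u \in nbr e w2 by rewrite /nbr inE.
    rewrite HN !inE (negbTE nuz) orbF.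
    by case/orP => // /eqP Euy; rewrite Euy Hcy in Hcu.
  move: HK HU; move: #|Kc e (recolor c z col) w2| #|Un e (recolor c z col) w2| => *; lia.
apply: leq_trans (subset_leq_card (_ : _ \subset [set col])) _; last by rewrite cards1.
by apply: subset_trans (@Kc_recolor_nadj _ e c z col w1 Hn1z) HK1.
Qed.

Lemma first (T : finType) (e : rel T) (c : pcoloring T 3) p b :
  symmetric e -> irreflexive e -> trifree e -> c4free e -> #|T| <= 7 ->
  (forall z, c z != None -> (z == p) || (z == b)) ->
  (forall z, c z != None -> z != b -> leaf e z) ->
  AliceWinsAlice e c.
Proof.
move=> Hsym Hirr Htri H4 HT Hcol Hlf.
have HCn : forall v, Cn e c v \subset [set p; b].
  by move=> v; apply/subsetP => x; rewrite /Cn !inE => /andP [_ /Hcol].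
have HK2 : forall v, #|Kc e c v| <= 2.
  move=> v; apply: leq_trans (Kc_Cn e c v) _.
  apply: leq_trans (subset_leq_card (HCn v)) _; by rewrite cards2; case: (p != b).
have Hns : ~ stuck e c by apply: notstuck => v _; exact: HK2.
pose U := [set v | ~~ safe e c v].
case: (set_0Vmem U) => [U0|[w1 Hw1]].
  apply: (@allsafe _ e _ c (leqnn _) _).2 => v.
  apply/negPn/negP => Hv; have : v \in U by rewrite inE Hv.
  by rewrite U0 inE.
case: (set_0Vmem (U :\ w1)) => [U1|[w2 Hw2]].
  apply: (@H_alice _ _ _ w1) => [v nv|_]; last exact: HK2.
  apply/negPn/negP => Hv; have : v \in U :\ w1 by rewrite !inE nv Hv.
  by rewrite U1 inE.
move: Hw2; rewrite !inE => /andP [n21 Hu2]; move: Hw1; rewrite inE => Hu1.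
have Hd1 := unsafe_deg Hu1; have Hd2 := unsafe_deg Hu2.
have Hc1 := unsafe_none Hu1; have Hc2 := unsafe_none Hu2.
have n12 : w1 != w2 by rewrite eq_sym.
have Hoth : forall v, v != w1 -> v != w2 -> safe e c v.
  move=> v n1 n2; apply/negPn/negP => Hv.
  by apply: (big3 Hsym Hirr Htri H4 HT n1 n12 n2) => //; exact: (unsafe_deg Hv).
have Hmove : forall x w d, c x = None -> d \notin Kc e c x ->
    (forall v, v != x -> v != w -> safe e c v) ->
    #|Kc e (recolor c x d) w| <= 1 -> AliceWinsAlice e c.
  move=> x w d Hcx Hd Hs Hk; apply: (mtg (x:=x) (d:=d) (w:=w)) => //; first by apply/legalP.
  move=> v nvw; case: (eqVneq v x) => [->|nvx]; first by rewrite /safe /recolor eqxx.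
  by apply: safe_recolor => //; exact: Hs.
have Hoth' : forall v, v != w2 -> v != w1 -> safe e c v by move=> v H1 H2; exact: Hoth.
case E12: (e w1 w2).
- have E21 : e w2 w1 by rewrite Hsym.
  have HKadd : forall x w d, #|Kc e c w| = 0 -> #|Kc e (recolor c x d) w| <= 1.
    move=> x w d H0; apply: leq_trans (subset_leq_card (Kc_recolor e c x d w)) _.
    by rewrite cardsU1 H0 addn0 leq_b1.
  have HC0 : forall v, Cn e c v = set0 -> #|Kc e c v| = 0.
    by move=> v H0; apply/eqP; rewrite -leqn0; apply: leq_trans (Kc_Cn e c v) _; rewrite H0 cards0.
  case: (set_0Vmem (Cn e c w2)) => [C2|[y Hy]].
    have [a Ha] := ex_free (HK2 w1).
    by apply: (Hmove w1 w2 a) => //; apply: HKadd; apply: HC0.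
  case: (set_0Vmem (Cn e c w1)) => [C1|[x Hx]].
    have [a Ha] := ex_free (HK2 w2).
    by apply: (Hmove w2 w1 a) => //; apply: HKadd; apply: HC0.
  move: Hx Hy; rewrite /Cn !inE => /andP [H1x Hcx] /andP [H2y Hcy].
  have nxy : x != y.
    by apply/eqP => Exy; subst y; apply: (Htri x w1 w2) => //; rewrite Hsym.
  have HXY : forall z, c z != None -> (z == x) || (z == y).
    move=> z Hz; move: (Hcol z Hz) (Hcol x Hcx) (Hcol y Hcy) nxy.
    by case/orP => /eqP -> /orP [] /eqP -> /orP [] /eqP ->; rewrite ?eqxx ?orbT.
  case Ex: (c x) Hcx => [cx|] // _; case Ey: (c y) Hcy => [cy|] // _.
  have HK1 : Kc e c w1 \subset [set cx].
    apply/subsetP => a; rewrite inE => /existsP [u /andP [H1u /eqP Hcu]].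
    have /HXY : c u != None by rewrite Hcu.
    case/orP => /eqP Eu; subst u.
      by rewrite Ex in Hcu; case: Hcu => ->; rewrite inE.
    by case: (Htri y w1 w2) => //; rewrite Hsym.
  have HK2' : Kc e c w2 \subset [set cy].
    apply/subsetP => a; rewrite inE => /existsP [u /andP [H2u /eqP Hcu]].
    have /HXY : c u != None by rewrite Hcu.
    case/orP => /eqP Eu; subst u.
      by case: (Htri x w2 w1) => //; rewrite Hsym.
    by rewrite Ey in Hcu; case: Hcu => ->; rewrite inE.
  case: (eqVneq cx cy) => [Exy|Nxy].
    subst cy; case: (adj_deg3 Hsym Htri HT E12 Hd1 Hd2) => Hd.
      apply: (@case_eq _ e c w2 w1 y x cx) => //.
      by move=> z /HXY; rewrite orbC.
    exact: (@case_eq _ e c w1 w2 x y cx).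
  apply: (Hmove w1 w2 cy) => //.
    by apply/negP => /(subsetP HK1); rewrite inE => /eqP E; rewrite E eqxx in Nxy.
  apply: leq_trans (subset_leq_card (_ : _ \subset [set cy])) _; last by rewrite cards1.
  apply: subset_trans (Kc_recolor e c w1 cy w2) _.
  by apply/subsetP => a; rewrite in_setU1 => /orP [/eqP->|/(subsetP HK2')]; rewrite ?inE.
- have N21 : ~~ e w2 w1 by rewrite Hsym E12.
  have N12 : ~~ e w1 w2 by rewrite E12.
  have Hp : forall v, 1 < #|Kc e c v| -> (p \in Cn e c v) && (p != b).
    move=> v Hv; have Hc := leq_trans Hv (Kc_Cn e c v).
    apply/andP; split.
      apply/negPn/negP => np.
      have : Cn e c v \subset [set b].
        apply/subsetP => u Hu; move: (subsetP (HCn v) u Hu); rewrite !inE.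
        by case/orP => [/eqP Eup|//]; rewrite -Eup Hu in np.
      by move/subset_leq_card; rewrite cards1 => H1; have := leq_trans Hc H1.
    apply/negP => /eqP Epb; move: (subset_leq_card (HCn v)); rewrite Epb cards2 eqxx /= => H1.
    by have := leq_trans Hc H1.
  have : #|Kc e c w1| <= 1 \/ #|Kc e c w2| <= 1.
    case: (leqP #|Kc e c w1| 1) => [H|H1]; first by left.
    case: (leqP #|Kc e c w2| 1) => [H|H2]; first by right.
    exfalso.
    have /andP [Hp1 npb] := Hp _ H1; have /andP [Hp2 _] := Hp _ H2.
    move: Hp1 Hp2; rewrite /Cn !inE => /andP [H1p Hcp] /andP [H2p _].
    have := Hlf p Hcp npb; rewrite /leaf => Hl.
    have : [set w1; w2] \subset [set y | e p y].
      by apply/subsetP => u; rewrite !inE => /orP [] /eqP ->; rewrite Hsym.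
    by move/subset_leq_card; rewrite Hl cards2 n12.
  case=> HK.
    have [a Ha] := ex_free (HK2 w2).
    apply: (Hmove w2 w1 a) => //.
    exact: leq_trans (subset_leq_card (@Kc_recolor_nadj _ e c w2 a w1 N12)) HK.
  have [a Ha] := ex_free (HK2 w1).
  apply: (Hmove w1 w2 a) => //.
  exact: leq_trans (subset_leq_card (@Kc_recolor_nadj _ e c w1 a w2 N21)) HK.
Qed.

Theorem lemma5p4 (T : finType) (e : rel T) (c : pcoloring T 3) :
  is_tree e ->
  proper_pcoloring e c ->
  (forall v, c v <> None -> leaf e v) ->
  #|[set v | c v != None]| <= 1 ->
  #|T| <= 7 ->
  alice_wins_MCG e c.
Proof.
move=> [[Hsym Hirr] _ Hac] _ Hleaf Hcard HT.
have Htri := acyc_tri Hirr Hac; have H4 := acyc_4 Hirr Hac.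
rewrite /alice_wins_MCG.
have Hlf : forall z, c z != None -> leaf e z by move=> z Hz; apply: Hleaf; exact/eqP.
case: (colP c) => [Hall|[v0 Hv0]].
  apply: awb_done => //; apply: notstuck => v Hv; by case: (Hall v Hv).
have [p Hp] : exists p, forall z, c z != None -> z == p.
  case: (pickP (fun v => c v != None)) => [q Hq|H]; last by exists v0 => z; rewrite H.
  exists q => z Hz; apply/negPn/negP => nzq.
  have : [set z; q] \subset [set v | c v != None].
    by apply/subsetP => u; rewrite !inE => /orP [] /eqP ->.
  by move/subset_leq_card; rewrite cards2 nzq => H2; have := leq_trans H2 Hcard.
have HK : forall v, #|Kc e c v| <= 2.
  move=> v; apply: leq_trans (Kc_Cn e c v) _.
  apply: leq_trans (subset_leq_card (_ : Cn e c v \subset [set p])) _; last by rewrite cards1.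
  by apply/subsetP => u; rewrite /Cn !inE => /andP [_ /Hp].
apply: awb_step.
- by apply: notstuck => v _; exact: HK.
- by move=> Hall; apply: (Hall v0).
- apply: (@first _ e c p p) => //.
    by move=> z /Hp ->.
  by move=> z Hz _; exact: Hlf.
- move=> v a /legalP [Hv _]; apply: (@first _ e _ p v) => //.
    move=> z; rewrite /recolor; case: (eqVneq z v) => [->|nzv]; first by rewrite ?eqxx ?orbT.
    by move/Hp => ->.
  move=> z; rewrite /recolor; case: (eqVneq z v) => [-> _|nzv Hz _]; first by rewrite ?eqxx.
  exact: Hlf.
Qed.
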